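(* Let $a,b\in\mathbb{R}$ with $a+b>-1$, and let $h_0\in\mathbb{R}$ with $h_0>a+1$ and $h_0>b+1$. Then $$\sum_{\ell=0}^{\infty}(1-2h)\,T_a(h)\,T_b(h)\Big|_{h=h_0+\ell}\;=\;-\frac{(a+h_0)(b+h_0)}{a+b+1}\,T_a(h_0)\,T_b(h_0)\;\equiv\;\mathcal{A}_{a,b}(h_0),$$ the series on the left being convergent.
   Context: For real $a$ and $h$, define $T_a(h)=\frac{1}{\Gamma(-a)^2}\frac{\Gamma(h-a-1)}{\Gamma(h+a+1)}$ (with $1/\Gamma(-a)^2=0$ when $a$ is a nonnegative integer). *)

(* Defs.v *)
From Stdlib Require Import Arith Factorial Reals Lra ClassicalEpsilon.
Open Scope R_scope.

(* Gauss/Euler product sequence for the reciprocal Gamma function: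
   1/Gamma(x) = lim_{n->oo} x(x+1)...(x+n) / (n! n^x).  (indexed by m = n-1 >= 0) *)
Definition rgamma_seq (x : R) (m : nat) : R :=
  let n := S m in
  (prod_f_R0 (fun k => x + INR k) n) / (INR (fact n) * Rpower (INR n) x).

(* Reciprocal Gamma function 1/Gamma (entire; vanishes exactly at 0,-1,-2,...),
   defined as the limit of the Gauss sequence (which exists for every real x). *)
Definition rgamma (x : R) : R :=
  epsilon (inhabits 0) (fun l => Un_cv (rgamma_seq x) l).

(* Gamma function on (0, +oo) (used only at positive arguments). *)
Definition Gamma (x : R) : R := / rgamma x.

(* T_a(h) = 1/Gamma(-a)^2 * Gamma(h-a-1)/Gamma(h+a+1);
   1/Gamma(-a)^2 = rgamma(-a)^2 is 0 when a is a nonnegative integer. *)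
Definition T (a h : R) : R :=
  (rgamma (- a)) ^ 2 * (Gamma (h - a - 1) / Gamma (h + a + 1)).

(* Main.v *)
Require Import Defs.
From Stdlib Require Import Reals.
From Stdlib Require Import Lra Lia ClassicalEpsilon Arith Factorial.
Open Scope R_scope.


Lemma ln_le' x y : 0 < x -> x <= y -> ln x <= ln y.
Proof. intros Hx Hxy. destruct (Req_dec x y) as [->|H]; [lra|].
  left; apply ln_increasing; lra. Qed.

Lemma exp_le' x y : x <= y -> exp x <= exp y.
Proof. intros H. destruct (Req_dec x y) as [->|H']; [lra|].
  left; apply exp_increasing; lra. Qed.

Lemma ln_upper t : -1 < t -> ln (1 + t) <= t.
Proof. intros Ht. rewrite <- (ln_exp t) at 2. apply ln_le'; [lra|].
  apply exp_ineq1_le. Qed.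

Lemma ln_lower t : 0 <= t -> t / (1 + t) <= ln (1 + t).
Proof. intros Ht.
  assert (H1 := exp_ineq1_le (- (t / (1 + t)))).
  rewrite exp_Ropp in H1.
  assert (E : exp (t / (1+t)) <= 1 + t).
  { assert (Hp := exp_pos (t/(1+t))).
    replace (1 + - (t / (1 + t))) with (/ (1+t)) in H1 by (field; lra).
    apply Rinv_le_contravar in H1; [|apply Rinv_0_lt_compat; lra].
    rewrite !Rinv_inv in H1. exact H1. }
  rewrite <- (ln_exp (t/(1+t))). apply ln_le'; [apply exp_pos| exact E]. Qed.

Lemma lnS_diff n : 0 < n -> 1/(n+1) <= ln (n+1) - ln n <= 1/n.
Proof. intros Hn.
  replace (ln (n+1)) with (ln n + ln (1 + 1/n)).
  2:{ rewrite <- ln_mult; [|lra|]. f_equal; field; lra.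
      apply Rlt_le_trans with 1; [lra|]. assert (0 < 1/n) by (apply Rdiv_lt_0_compat; lra). lra. }
  assert (0 < 1/n) by (apply Rdiv_lt_0_compat; lra).
  split.
  - replace (1/(n+1)) with ((1/n)/(1 + 1/n)) by (field; lra).
    assert (HH := ln_lower (1/n) ltac:(lra)). lra.
  - assert (HH := ln_upper (1/n) ltac:(lra)). lra.
Qed.

Definition P (x : R) (n : nat) := prod_f_R0 (fun k => x + INR k) n.

Lemma P_S x n : P x (S n) = P x n * (x + INR (S n)).
Proof. reflexivity. Qed.

Lemma P_pos x n : 0 < x -> 0 < P x n.
Proof. intros Hx. induction n.
  - unfold P; simpl. lra.
  - rewrite P_S. apply Rmult_lt_0_compat; [auto|]. assert (H:=pos_INR (S n)). lra. Qed.

Lemma fact_pos n : 0 < INR (fact n).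
Proof. apply lt_0_INR. apply lt_O_fact. Qed.

Lemma g_def x m : rgamma_seq x m = P x (S m) / (INR (fact (S m)) * exp (x * ln (INR (S m)))).
Proof. reflexivity. Qed.

Lemma INRS_pos m : 0 < INR (S m).
Proof. apply lt_0_INR; lia. Qed.

Lemma g_pos x m : 0 < x -> 0 < rgamma_seq x m.
Proof. intros Hx. rewrite g_def. apply Rdiv_lt_0_compat; [apply P_pos; auto|].
  apply Rmult_lt_0_compat; [apply fact_pos|apply exp_pos]. Qed.

Lemma g_step x m : 0 < x -> rgamma_seq x (S m) =
  rgamma_seq x m * exp (ln (1 + x / INR (S (S m))) + x * (ln (INR (S m)) - ln (INR (S (S m))))).
Proof. intros Hx. rewrite !g_def, P_S, exp_plus, exp_ln.
  2:{ assert (0 < x / INR (S (S m))) by (apply Rdiv_lt_0_compat; [lra|apply INRS_pos]). lra. }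
  rewrite fact_simpl, mult_INR.
  replace (x * (ln (INR (S m)) - ln (INR (S (S m))))) with (x * ln (INR (S m)) + - (x * ln (INR (S (S m))))) by ring.
  rewrite exp_plus, exp_Ropp.
  assert (H1 := INRS_pos (S m)). assert (H2 := fact_pos (S m)).
  assert (H3 := exp_pos (x * ln (INR (S m)))). assert (H4 := exp_pos (x * ln (INR (S (S m))))).
  field. repeat split; lra.
Qed.

Lemma g_decr x : 0 < x -> Un_decreasing (rgamma_seq x).
Proof. intros Hx m. rewrite g_step by auto.
  assert (Hg := g_pos x m Hx).
  rewrite <- (Rmult_1_r (rgamma_seq x m)) at 2.
  apply Rmult_le_compat_l; [lra|]. apply Rle_trans with (exp 0); [|rewrite exp_0; lra]. apply exp_le'.
  set (n := INR (S m)).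
  assert (Hn : 0 < n) by apply INRS_pos.
  replace (INR (S (S m))) with (n + 1) by (unfold n; rewrite (S_INR (S m)); ring).
  assert (HH := ln_upper (x / (n+1)) ltac:(assert (0 < x/(n+1)) by (apply Rdiv_lt_0_compat; lra); lra)).
  destruct (lnS_diff n Hn) as [L1 L2].
  assert (x * (1/(n+1)) <= x * (ln (n+1) - ln n)) by (apply Rmult_le_compat_l; lra).
  replace (x * (1/(n+1))) with (x/(n+1)) in H by (field; lra).
  replace (x * (ln n - ln (n + 1))) with (- (x * (ln (n+1) - ln n))) by ring. lra.
Qed.

Lemma P_lower x n : 0 < x ->
  x * INR (fact n) * exp (x * (ln (INR n + 1 + x) - ln (1 + x))) <= P x n.
Proof. intros Hx. induction n.
  - unfold P; simpl. replace (0 + 1 + x) with (1 + x) by ring.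
    replace (x * (ln (1+x) - ln (1+x))) with 0 by ring. rewrite exp_0. lra.
  - rewrite P_S, fact_simpl, mult_INR, S_INR.
    set (m := INR n). assert (Hm := pos_INR n). fold m in IHn, Hm.
    set (E := exp (x * (ln (m + 1 + x) - ln (1 + x)))) in *.
    assert (HE : exp (x * (ln (m + 1 + 1 + x) - ln (1 + x))) <= E * (1 + x / (m+1))).
    { unfold E.
      replace (x * (ln (m + 1 + 1 + x) - ln (1 + x))) with
        (x * (ln (m + 1 + x) - ln (1 + x)) + x * (ln (m+1+x+1) - ln (m+1+x))) by (ring_simplify; replace (m+1+1+x) with (m+1+x+1) by ring; ring).
      rewrite exp_plus. apply Rmult_le_compat_l; [left; apply exp_pos|].
      destruct (lnS_diff (m+1+x) ltac:(lra)) as [_ L2].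
      assert (HL := ln_lower (x/(m+1)) ltac:(apply Rlt_le, Rdiv_lt_0_compat; lra)).
      rewrite <- (exp_ln (1 + x/(m+1))) by (assert (0 < x/(m+1)) by (apply Rdiv_lt_0_compat; lra); lra).
      apply exp_le'.
      replace (x / (m + 1) / (1 + x / (m + 1))) with (x * (1/(m+1+x))) in HL by (field; lra).
      assert (x * (ln (m + 1 + x + 1) - ln (m + 1 + x)) <= x * (1/(m+1+x))) by (apply Rmult_le_compat_l; lra).
      lra. }
    assert (HF := fact_pos n).
    assert (HE0 : 0 <= E) by (left; apply exp_pos).
    assert (x * (m + 1) * INR (fact n) * (E * (1 + x / (m + 1))) = x * INR (fact n) * E * (x + (m+1))).
    { field. lra. }
    apply Rle_trans with (x * (m + 1) * INR (fact n) * (E * (1 + x / (m + 1)))).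
    + apply Rle_trans with (x*(m+1)*INR(fact n) * exp (x * (ln (m + 1 + 1 + x) - ln (1 + x)))); [right; ring|].
      apply Rmult_le_compat_l; [|exact HE].
      apply Rmult_le_pos; [|lra]. apply Rmult_le_pos; lra.
    + rewrite H. apply Rmult_le_compat_r; [lra|]. exact IHn.
Qed.

Lemma g_lower x m : 0 < x -> x * exp (- (x * ln (1 + x))) <= rgamma_seq x m.
Proof. intros Hx. rewrite g_def.
  assert (HP := P_lower x (S m) Hx).
  set (n := INR (S m)) in *. assert (Hn : 0 < n) by apply INRS_pos.
  assert (HF := fact_pos (S m)).
  assert (He := exp_pos (x * ln n)).
  apply Rmult_le_reg_r with (INR (fact (S m)) * exp (x * ln n)); [apply Rmult_lt_0_compat; lra|].
  replace (P x (S m) / (INR (fact (S m)) * exp (x * ln n)) * (INR (fact (S m)) * exp (x * ln n))) with (P x (S m)) by (field; split; lra).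
  eapply Rle_trans; [|exact HP].
  replace (x * exp (- (x * ln (1 + x))) * (INR (fact (S m)) * exp (x * ln n)))
    with (x * INR (fact (S m)) * exp (x * (ln n - ln (1+x))))
    by (replace (x * (ln n - ln (1+x))) with (- (x * ln (1 + x)) + x * ln n) by ring; rewrite exp_plus; ring).
  apply Rmult_le_compat_l; [apply Rmult_le_pos; lra|].
  apply exp_le'. apply Rmult_le_compat_l; [lra|].
  assert (ln n <= ln (n + 1 + x)) by (apply ln_le'; lra). lra.
Qed.

Lemma lim_lower (u : nat -> R) l c : Un_cv u l -> (forall n, c <= u n) -> c <= l.
Proof. intros Hu Hc. destruct (Rle_or_lt c l) as [H|H]; [auto|].
  destruct (Hu (c - l) ltac:(lra)) as [N HN]. specialize (HN N (le_n N)).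
  unfold Rdist in HN. specialize (Hc N). apply Rabs_def2 in HN. lra. Qed.

Lemma rg_cv x : 0 < x -> Un_cv (rgamma_seq x) (rgamma x).
Proof. intros Hx. unfold rgamma. apply epsilon_spec.
  destruct (decreasing_cv (rgamma_seq x) (g_decr x Hx)) as [l Hl].
  - exists 0. intros r [i ->]. unfold opp_seq. assert (H:=g_pos x i Hx). lra.
  - exists l; exact Hl. Qed.

Lemma rg_pos x : 0 < x -> 0 < rgamma x.
Proof. intros Hx. apply Rlt_le_trans with (x * exp (- (x * ln (1 + x)))).
  - apply Rmult_lt_0_compat; [lra|apply exp_pos].
  - apply lim_lower with (rgamma_seq x); [apply rg_cv; auto|]. intros; apply g_lower; auto. Qed.

Lemma P_shift x n : x * P (x+1) n = P x n * (x + INR n + 1).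
Proof. induction n.
  - unfold P; simpl. ring.
  - rewrite !P_S. rewrite <- Rmult_assoc, IHn, S_INR. ring. Qed.

Lemma Un_cv_ext (u v : nat -> R) l : (forall n, u n = v n) -> Un_cv u l -> Un_cv v l.
Proof. intros E H e He. destruct (H e He) as [N HN]. exists N. intros n Hn. rewrite <- E. auto. Qed.

Lemma ratio_cv x : 0 < x -> Un_cv (fun m => INR (S m) / (x + INR (S m) + 1)) 1.
Proof. intros Hx e He. destruct (INR_archimed e (x+1) He) as [N HN].
  exists N. intros n Hn. unfold Rdist.
  assert (Hn' : INR N <= INR n) by (apply le_INR; lia).
  assert (H1 := INRS_pos n). rewrite S_INR in *.
  replace (INR n + 1) with (INR n + 1) by ring.
  replace ((INR n + 1) / (x + (INR n + 1) + 1) - 1) with (- ((x+1) / (x + INR n + 2))) by (field; lra).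
  rewrite Rabs_Ropp, Rabs_right by (apply Rle_ge, Rlt_le, Rdiv_lt_0_compat; lra).
  apply Rmult_lt_reg_r with (x + INR n + 2); [lra|].
  unfold Rdiv; rewrite Rmult_assoc, Rinv_l, Rmult_1_r by lra.
  assert (INR N * e <= INR n * e) by (apply Rmult_le_compat_r; lra). nra.
Qed.

Lemma rg_func x : 0 < x -> rgamma x = x * rgamma (x + 1).
Proof. intros Hx.
  assert (H1 := rg_cv (x+1) ltac:(lra)).
  assert (H2 := CV_mult _ _ _ _ H1 (ratio_cv x Hx)).
  apply (UL_sequence (rgamma_seq x)); [apply rg_cv; auto|].
  replace (x * rgamma (x+1)) with (x * (rgamma (x+1) * 1)) by ring.
  apply Un_cv_ext with (fun m => x * (rgamma_seq (x+1) m * (INR (S m) / (x + INR (S m) + 1)))).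
  2:{ intros e He. destruct (H2 (e / x) ltac:(apply Rdiv_lt_0_compat; lra)) as [N HN].
      exists N. intros n Hn. specialize (HN n Hn). unfold Rdist in *.
      rewrite <- Rmult_minus_distr_l, Rabs_mult, Rabs_right by lra.
      apply Rmult_lt_reg_r with (/ x); [apply Rinv_0_lt_compat; lra|].
      replace (x * Rabs (rgamma_seq (x + 1) n * (INR (S n) / (x + INR (S n) + 1)) - rgamma (x + 1) * 1) * / x)
        with (Rabs (rgamma_seq (x + 1) n * (INR (S n) / (x + INR (S n) + 1)) - rgamma (x + 1) * 1)) by (field; lra).
      exact HN. }
  intros m. rewrite !g_def.
  assert (HPs := P_shift x (S m)).
  assert (Hn := INRS_pos m). assert (HF := fact_pos (S m)).
  assert (He := exp_pos (x * ln (INR (S m)))).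
  replace ((x+1) * ln (INR (S m))) with (x * ln (INR (S m)) + ln (INR (S m))) by ring.
  rewrite exp_plus, exp_ln by lra.
  assert (HPp := P_pos x (S m) Hx).
  set (F := INR (fact (S m))) in *. set (e := exp (x * ln (INR (S m)))) in *. set (n := INR (S m)) in *.
  transitivity ((x * P (x+1) (S m)) / (F * e * (x + n + 1))).
  - field. repeat split; lra.
  - rewrite HPs. field. repeat split; lra.
Qed.

Lemma T_eq a h : 0 < h - a - 1 -> 0 < h + a + 1 ->
  T a h = rgamma (- a) ^ 2 * (rgamma (h + a + 1) / rgamma (h - a - 1)).
Proof. intros H1 H2. unfold T, Gamma. unfold Rdiv. rewrite Rinv_inv. ring. Qed.

Lemma T_nonneg a h : 0 < h - a - 1 -> 0 < h + a + 1 -> 0 <= T a h.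
Proof. intros H1 H2. rewrite T_eq by auto.
  apply Rmult_le_pos; [apply pow2_ge_0|].
  left; apply Rdiv_lt_0_compat; apply rg_pos; auto. Qed.

Lemma T_shift a h : 0 < h - a - 1 -> 0 < h + a + 1 ->
  (h - a - 1) * T a h = (h + a + 1) * T a (h + 1).
Proof. intros H1 H2. rewrite !T_eq by lra.
  rewrite (rg_func (h - a - 1)) by auto. rewrite (rg_func (h + a + 1)) by auto.
  replace (h + 1 + a + 1) with (h + a + 1 + 1) by ring.
  replace (h + 1 - a - 1) with (h - a - 1 + 1) by ring.
  assert (P1 := rg_pos (h - a - 1 + 1) ltac:(lra)).
  field. lra.
Qed.

Definition Aab a b h := - ((a + h) * (b + h)) / (a + b + 1) * T a h * T b h.

Lemma tele a b h : a + b > -1 -> 0 < h - a - 1 -> 0 < h + a + 1 -> 0 < h - b - 1 -> 0 < h + b + 1 ->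
  Aab a b h - Aab a b (h + 1) = (1 - 2 * h) * T a h * T b h.
Proof. intros Hs H1 H2 H3 H4. unfold Aab.
  assert (E1 := T_shift a h H1 H2). assert (E2 := T_shift b h H3 H4).
  replace (- ((a + (h + 1)) * (b + (h + 1))) / (a + b + 1) * T a (h + 1) * T b (h + 1))
    with (- / (a + b + 1) * ((h + a + 1) * T a (h + 1)) * ((h + b + 1) * T b (h + 1))) by (field; lra).
  rewrite <- E1, <- E2. field. lra.
Qed.

Section Main.
Variables a b h0 : R.
Hypothesis hab : a + b > -1.
Hypothesis ha : h0 > a + 1.
Hypothesis hb : h0 > b + 1.

Definition B n := - Aab a b (h0 + INR n).

Lemma hconds n : let h := h0 + INR n in
  0 < h - a - 1 /\ 0 < h + a + 1 /\ 0 < h - b - 1 /\ 0 < h + b + 1 /\ 0 < h + a /\ 0 < h + b /\ h0 <= h.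
Proof. intros h. assert (Hn := pos_INR n). unfold h. repeat split; lra. Qed.

Lemma B_nonneg n : 0 <= B n.
Proof. destruct (hconds n) as (H1 & H2 & H3 & H4 & H5 & H6 & _).
  unfold B, Aab. set (h := h0 + INR n) in *.
  assert (Ta := T_nonneg a h H1 H2). assert (Tb := T_nonneg b h H3 H4).
  replace (- (- ((a + h) * (b + h)) / (a + b + 1) * T a h * T b h))
    with ((h + a) * (h + b) * T a h * T b h / (a + b + 1)) by (field; lra).
  apply Rmult_le_pos; [|left; apply Rinv_0_lt_compat; lra].
  apply Rmult_le_pos; [|exact Tb]. apply Rmult_le_pos; [|exact Ta]. apply Rmult_le_pos; lra.
Qed.

Lemma B_rec n : let h := h0 + INR n in
  B (S n) = B n * ((h - a - 1) * (h - b - 1) / ((h + a) * (h + b))).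
Proof. intros h. destruct (hconds n) as (H1 & H2 & H3 & H4 & H5 & H6 & _). fold h in H1, H2, H3, H4, H5, H6.
  unfold B. rewrite S_INR. replace (h0 + (INR n + 1)) with (h + 1) by (unfold h; ring).
  unfold Aab.
  assert (E1 := T_shift a h H1 H2). assert (E2 := T_shift b h H3 H4).
  replace (- (- ((a + (h + 1)) * (b + (h + 1))) / (a + b + 1) * T a (h + 1) * T b (h + 1)))
    with (/ (a + b + 1) * ((h + a + 1) * T a (h + 1)) * ((h + b + 1) * T b (h + 1))) by (field; lra).
  rewrite <- E1, <- E2. fold h. field. repeat split; lra.
Qed.

Definition u0 := h0 - 1/2.
Definition s := a + b + 1.
Definition K := u0 + s / 2.
Definition c := 2 * s * u0 / K.

Lemma consts : 0 < s /\ 0 < u0 /\ 0 < K /\ 0 < c.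
Proof. unfold c, K, s, u0. assert (0 < a + b + 1) by lra. assert (0 < h0 - 1/2) by lra.
  repeat split; try lra. apply Rdiv_lt_0_compat; nra. Qed.

Lemma ratio_bound n : let h := h0 + INR n in
  let rho := (h - a - 1) * (h - b - 1) / ((h + a) * (h + b)) in
  0 <= rho /\ c / (INR n + K) <= 1 - rho.
Proof. intros h rho. destruct (hconds n) as (H1 & H2 & H3 & H4 & H5 & H6 & H7). fold h in H1, H2, H3, H4, H5, H6, H7.
  destruct consts as (Hs & Hu & HK & Hc).
  split.
  - unfold rho. left; apply Rdiv_lt_0_compat; apply Rmult_lt_0_compat; lra.
  - assert (Hv : INR n + K = h + (a + b) / 2) by (unfold K, u0, s, h; field).
    rewrite Hv.
    assert (Hpos : 0 < (h + a) * (h + b)) by nra.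
    assert (E : 1 - rho = s * (2 * h - 1) / ((h + a) * (h + b))) by (unfold rho, s; field; lra).
    rewrite E.
    set (v := h + (a + b) / 2) in *.
    assert (Hvp : 0 < v) by (unfold v; lra).
    assert (AM : (h + a) * (h + b) <= v * v) by (unfold v; pose proof (pow2_ge_0 (a - b)); nra).
    assert (Cv : c * v <= s * (2 * h - 1)).
    { unfold c. apply Rmult_le_reg_r with K; [lra|].
      replace (2 * s * u0 / K * v * K) with (2 * s * u0 * v) by (field; lra).
      assert (EQ : s*(2*h-1)*K - 2*s*u0*v = s*s*(h-h0)) by (unfold v, K, u0, s; field).
      assert (0 <= s*s*(h-h0)) by (apply Rmult_le_pos; nra). lra. }
    apply Rmult_le_reg_r with (v * ((h + a) * (h + b))); [nra|].
    replace (c / v * (v * ((h + a) * (h + b)))) with (c * ((h+a)*(h+b))) by (field; lra).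
    replace (s * (2 * h - 1) / ((h + a) * (h + b)) * (v * ((h + a) * (h + b)))) with (s * (2 * h - 1) * v) by (field; lra).
    apply Rle_trans with (c * (v * v)); [apply Rmult_le_compat_l; lra|].
    replace (c * (v * v)) with (c * v * v) by ring.
    apply Rmult_le_compat_r; lra.
Qed.

Lemma invariant n : B n * (1 + c * (ln (INR n + K) - ln K)) <= B 0.
Proof. destruct consts as (Hs & Hu & HK & Hc). induction n.
  - simpl. replace (0 + K) with K by ring. right; ring.
  - rewrite B_rec. destruct (ratio_bound n) as [R1 R2].
    set (rho := (h0 + INR n - a - 1) * (h0 + INR n - b - 1) / ((h0 + INR n + a) * (h0 + INR n + b))) in *.
    assert (Hn := pos_INR n).
    set (S0 := c * (ln (INR n + K) - ln K)) in *.
    assert (HS0 : 0 <= S0).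
    { unfold S0. apply Rmult_le_pos; [lra|]. assert (ln K <= ln (INR n + K)) by (apply ln_le'; lra). lra. }
    rewrite S_INR.
    destruct (lnS_diff (INR n + K) ltac:(lra)) as [_ L2].
    replace (ln (INR n + 1 + K)) with (ln (INR n + K + 1)) by (f_equal; ring).
    set (d := c * (ln (INR n + K + 1) - ln (INR n + K))).
    assert (Hd0 : 0 <= d).
    { unfold d. apply Rmult_le_pos; [lra|]. assert (ln (INR n + K) <= ln (INR n + K + 1)) by (apply ln_le'; lra). lra. }
    assert (Hdq : d <= 1 - rho).
    { apply Rle_trans with (c / (INR n + K)); [|exact R2]. unfold d.
      replace (c / (INR n + K)) with (c * (1 / (INR n + K))) by (field; lra).
      apply Rmult_le_compat_l; lra. }
    replace (c * (ln (INR n + K + 1) - ln K)) with (S0 + d) by (unfold S0, d; ring).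
    assert (HB := B_nonneg n).
    apply Rle_trans with (B n * (1 + S0)); [|exact IHn].
    set (q := 1 - rho) in *. replace rho with (1 - q) by (unfold q; ring).
    assert (Hq : 0 <= q) by lra.
    assert (X : (1 - q) * (1 + S0 + d) <= 1 + S0) by nra.
    replace (B n * (1 - q) * (1 + (S0 + d))) with (B n * ((1 - q) * (1 + S0 + d))) by ring.
    apply Rmult_le_compat_l; lra.
Qed.

Lemma B_cv : Un_cv B 0.
Proof. destruct consts as (Hs & Hu & HK & Hc). intros e He.
  set (M := ln K + B 0 / (c * e)).
  destruct (INR_archimed 1 (exp M) ltac:(lra)) as [N HN]. rewrite Rmult_1_r in HN.
  exists N. intros n Hn. unfold Rdist. rewrite Rminus_0_r.
  assert (HB := B_nonneg n). rewrite Rabs_right by lra.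
  assert (Hn' : INR N <= INR n) by (apply le_INR; lia).
  assert (HL : M < ln (INR n + K)).
  { rewrite <- (ln_exp M). apply ln_increasing; [apply exp_pos|lra]. }
  set (L := ln (INR n + K) - ln K) in *.
  assert (HcL : B 0 < e * (c * L)).
  { assert (B 0 / (c * e) < L) by (unfold L, M in *; lra).
    apply Rmult_lt_compat_l with (r := c * e) in H; [|nra].
    replace (c * e * (B 0 / (c * e))) with (B 0) in H by (field; lra). nra. }
  assert (Inv := invariant n). fold L in Inv.
  assert (0 < c * L) by (assert (0 <= B 0) by apply B_nonneg; nra).
  apply Rmult_lt_reg_r with (c * L); [lra|]. nra.
Qed.
End Main.

Theorem mainTheorem1 (a b h0 : R)
  (hab : a + b > -1) (ha : h0 > a + 1) (hb : h0 > b + 1) :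
  infinite_sum
    (fun l : nat => let h := h0 + INR l in (1 - 2 * h) * T a h * T b h)
    (- ((a + h0) * (b + h0)) / (a + b + 1) * T a h0 * T b h0).
Proof.
  set (f := fun l : nat => let h := h0 + INR l in (1 - 2 * h) * T a h * T b h).
  assert (Hsum : forall n, sum_f_R0 f n = Aab a b h0 + B a b h0 (S n)).
  { induction n.
    - change (sum_f_R0 f 0%nat) with (f 0%nat). unfold f, B. cbv zeta.
      replace (INR 1) with 1 by reflexivity. replace (INR 0) with 0 by reflexivity.
      rewrite Rplus_0_r.
      assert (Ht := tele a b h0 hab ltac:(lra) ltac:(lra) ltac:(lra) ltac:(lra)). lra.
    - change (sum_f_R0 f (S n)) with (sum_f_R0 f n + f (S n)). rewrite IHn.
      unfold f, B. cbv zeta.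
      destruct (hconds a b h0 hab ha hb (S n)) as (H1 & H2 & H3 & H4 & _).
      rewrite (S_INR (S n)). rewrite <- Rplus_assoc.
      assert (Ht := tele a b (h0 + INR (S n)) hab H1 H2 H3 H4). lra. }
  intros e He. destruct (B_cv a b h0 hab ha hb e He) as [N HN].
  exists N. intros n Hn. rewrite Hsum.
  specialize (HN (S n) ltac:(lia)). unfold Rdist in *.
  replace (Aab a b h0 + B a b h0 (S n) - - ((a + h0) * (b + h0)) / (a + b + 1) * T a h0 * T b h0)
    with (B a b h0 (S n) - 0) by (unfold Aab; ring).
  exact HN.
Qed.
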